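(* Let $q=2^n$, let $B$ be a $k$-subset of $\mathrm{GF}(q)$ with $k\ge3$, and let $\mathcal B=\mathrm{GA}_1(q)(B)$. Suppose that $\hat f_B(\mu)=\sum_{x\in\mathrm{GF}(q)}(-1)^{\mathrm{Tr}(x^t+\mu^dx)}$ for all $\mu\in\mathrm{GF}(q)$, where $t,d$ are positive integers with $\gcd(td,q-1)=1$. Then $(\mathrm{GF}(q),\mathcal B)$ is a $3$-design if and only if the number $|\{x\in\mathrm{GF}(q):(u^dx+(1+u)^d)^t+x^t+1=0\}|$ is independent of $u\in\mathrm{GF}(q)\setminus\mathrm{GF}(2)$.
   Context: $\mathrm{Tr}$ is the absolute trace $\mathrm{GF}(2^n)\to\mathrm{GF}(2)$. $f_B$ is the characteristic function of $B$ as a Boolean function, and $\hat f(\mu)=\sum_{x\in\mathrm{GF}(2^n)}(-1)^{f(x)+\mathrm{Tr}(\mu x)}$ is the Walsh transform. $\mathrm{GA}_1(q)$ is the group of permutations $x\mapsto ax+b$ of $\mathrm{GF}(q)$ with $a\ne0$; $\mathrm{GA}_1(q)(B)=\{\pi(B):\pi\in\mathrm{GA}_1(q)\}$. A pair $(\mathcal P,\mathcal B)$ with $\mathcal B$ a set of $k$-subsets of $\mathcal P$ is a $3$-design if every $3$-subset of $\mathcal P$ lies in exactly $\lambda$ members of $\mathcal B$ for some constant $\lambda$. *)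

(* Defs.v *)
From HB Require Import structures.
From mathcomp Require Import all_boot all_order all_algebra all_field.
Set Implicit Arguments. Unset Strict Implicit. Unset Printing Implicit Defensive.
Import GRing.Theory.
Local Open Scope ring_scope.

(* Absolute trace GF(2^n) -> GF(2), valued in F (its values are 0 or 1). *)
Definition Tr (F : finFieldType) (n : nat) (x : F) : F :=
  \sum_(i < n) x ^+ (2 ^ i).

Definition trsign (F : finFieldType) (n : nat) (y : F) : int :=
  if Tr n y == 0 then 1 else -1.

Definition walsh (F : finFieldType) (n : nat) (f : F -> bool) (mu : F) : int :=
  \sum_(x : F) (-1) ^+ (f x) * trsign n (mu * x).

Definition GA1_orbit (F : finFieldType) (B : {set F}) : {set {set F}} :=
  [set [set ab.1 * x + ab.2 | x in B] | ab in [set ab : F * F | ab.1 != 0]].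

Definition is_t_design (P : finType) (t k : nat) (blocks : {set {set P}}) : Prop :=
  (forall Bl, Bl \in blocks -> #|Bl| = k) /\
  exists lambda : nat, forall T : {set P}, #|T| = t ->
    #|[set Bl in blocks | T \subset Bl]| = lambda.

(* Main.v *)
Require Import Defs.
From HB Require Import structures.
From mathcomp Require Import all_boot all_order all_algebra all_field.
From mathcomp Require Import ring zify.
Set Implicit Arguments. Unset Strict Implicit. Unset Printing Implicit Defensive.
Import GRing.Theory.
Local Open Scope ring_scope.


Section Trace.
Variables (n : nat) (F : finFieldType).
Hypothesis hF : #|F| = (2 ^ n)%N.

Lemma char2 : 2 \in [pchar F].
Proof. exact: (card_finPcharP hF). Qed.

Lemma two0 : (2%:R : F) = 0.
Proof. by have /andP[_ /eqP] := char2. Qed.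

Lemma oppF (x : F) : - x = x.
Proof. by apply: oppr_pchar2; apply: char2. Qed.

Lemma addxx (x : F) : x + x = 0.
Proof. by rewrite -mulr2n -mulr_natr two0 mulr0. Qed.

Lemma n_gt0 : (0 < n)%N.
Proof.
have H1 : (1 < #|F|)%N.
  apply/card_gt1P; exists 0, 1; split => //; by rewrite eq_sym oner_eq0.
by move: H1; rewrite hF; case: (n).
Qed.

Lemma frob2 (x y : F) i : (x + y) ^+ (2 ^ i) = x ^+ (2 ^ i) + y ^+ (2 ^ i).
Proof.
elim: i => [|i IH]; first by rewrite !expr1.
by rewrite expnS mulnC !exprM IH sqrrD -mulr_natr two0 mulr0 addr0.
Qed.

Lemma TrD (x y : F) : Tr n (x + y) = Tr n x + Tr n y.
Proof. by rewrite /Tr -big_split /=; apply: eq_bigr => i _; rewrite frob2. Qed.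

Lemma Tr_sq (x : F) : Tr n x ^+ 2 = Tr n x.
Proof.
rewrite /Tr.
have -> : (\sum_(i < n) x ^+ (2 ^ i)) ^+ 2 = \sum_(i < n) x ^+ (2 ^ i.+1).
  elim/big_rec2: _ => [|i a b _ <-]; first by rewrite expr0n.
  by rewrite sqrrD -mulr_natr two0 mulr0 addr0 expnS mulnC exprM.
case: n n_gt0 hF => // m _ hm.
rewrite big_ord_recr big_ord_recl /= -hm expf_card addrC; by congr (_ + _).
Qed.

Lemma Tr01 (x : F) : (Tr n x == 0) || (Tr n x == 1).
Proof.
have /eqP : Tr n x * (Tr n x - 1) = 0 by rewrite mulrBr mulr1 -expr2 Tr_sq subrr.
by rewrite mulf_eq0 subr_eq0.
Qed.

Lemma trsignD (x y : F) : trsign n (x + y) = trsign n x * trsign n y.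
Proof.
rewrite /trsign TrD.
case/orP: (Tr01 x) => /eqP->; case/orP: (Tr01 y) => /eqP->;
  rewrite ?add0r ?addr0 ?eqxx ?oner_eq0 ?addxx ?eqxx //=.
Qed.

Lemma Tr0 : Tr n (0 : F) = 0.
Proof. by rewrite /Tr big1 // => i _; rewrite expr0n expn_eq0. Qed.

Lemma Tr_ne0 : exists y : F, Tr n y != 0.
Proof.
case: (boolP [exists y : F, Tr n y != 0]) => [/existsP //|]; rewrite negb_exists => /forallP /= H; exfalso.
pose P : {poly F} := \sum_(i < n) 'X^(2 ^ i).
have HP y : P.[y] = Tr n y.
  by rewrite /P horner_sum /Tr; apply: eq_bigr => i _; rewrite hornerXn.
have P1 : P`_1 = 1.
  rewrite /P coef_sum; case: n n_gt0 => // m _.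
  rewrite big_ord_recl /= coefXn eqxx big1 ?addr0 // => i _.
  rewrite coefXn; case: eqP => // H2; exfalso; move: H2.
  by rewrite expnS; have := expn_gt0 2 i; case: (2 ^ i)%N => // j _; rewrite mul2n doubleS.
have Pn0 : P != 0 by apply/eqP => P0; move: P1; rewrite P0 coef0 => /eqP; rewrite eq_sym oner_eq0.
have := max_poly_roots Pn0 (rs := enum F).
rewrite enum_uniq -cardE.
have -> : all (root P) (enum F).
  by apply/allP => y _; rewrite /root HP; move: (H y); rewrite negbK.
move=> /(_ isT isT).
have sz : (size P <= (2 ^ n.-1).+1)%N.
  apply: leq_trans (size_sum _ _ _) _; apply/bigmax_leqP => i _.
  rewrite size_polyXn ltnS leq_pexp2l // -ltnS prednK ?n_gt0 //.
rewrite hF => H3; have := leq_trans H3 sz.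
case: n n_gt0 => // m _; rewrite expnS /= ltnS mul2n -addnn.
by have := expn_gt0 2 m; lia.
Qed.

Lemma trsign0 : trsign n (0 : F) = 1.
Proof. by rewrite /trsign Tr0 eqxx. Qed.

Lemma sum_trsign : \sum_(x : F) trsign n x = 0.
Proof.
have [y0 Hy0] := Tr_ne0.
have Hy1 : Tr n y0 = 1 by move: (Tr01 y0); rewrite (negbTE Hy0) => /eqP.
have chy : trsign n y0 = -1 by rewrite /trsign Hy1 oner_eq0.
set S := \sum_x _.
have : S = - S.
  rewrite {1}/S (reindex_inj (addIr y0)) /=.
  rewrite /S -sumrN; apply: eq_bigr => x _; by rewrite trsignD chy mulrN1.
move/eqP; rewrite -addr_eq0 -mulr2n -mulr_natr mulf_eq0 => /orP[/eqP //|].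
by [].
Qed.

Lemma orth (mu : F) : \sum_(x : F) trsign n (mu * x) = if mu == 0 then (#|F|)%:R else 0.
Proof.
case: eqP => [->|/eqP mu0].
  under eq_bigr do rewrite mul0r trsign0.
  by rewrite sumr_const.
rewrite (reindex_inj (mulfI (invr_neq0 mu0))) /=.
under eq_bigr do rewrite mulrA mulfV // mul1r.
exact: sum_trsign.
Qed.

Lemma pow_inj m : (0 < m)%N -> coprime m (2 ^ n).-1 -> injective (fun x : F => x ^+ m).
Proof.
move=> m0 cop x y /= Exy.
have [x0|x0] := eqVneq x 0.
  by move: Exy; rewrite x0 expr0n (gtn_eqF m0) => /eqP; rewrite eq_sym expf_eq0 m0 => /eqP.
have [y0|y0] := eqVneq y 0.
  by move: Exy; rewrite y0 expr0n (gtn_eqF m0) => /eqP; rewrite expf_eq0 m0 (negbTE x0).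
set z := x / y.
have z0 : z != 0 by rewrite mulf_neq0 ?invr_neq0.
have zm : z ^+ m = 1 by rewrite /z exprMn exprVn Exy mulfV // expf_neq0.
have zq : z ^+ (2 ^ n).-1 = 1.
  have := expf_card z; rewrite hF -(prednK (expn_gt0 2 n)) exprS.
  by move/(congr1 (fun w => z^-1 * w)); rewrite mulrA mulVf // mul1r.
have : z = 1.
  case: (egcdnP (2 ^ n).-1 m0) => km kn E _.
  move: cop; rewrite /coprime => /eqP g1; rewrite g1 in E.
  have := congr1 (fun e => z ^+ e) E; rewrite /= exprD [(km * m)%N]mulnC [(kn * _)%N]mulnC !exprM zm zq !expr1n.
  by rewrite mul1r expr1 => ->.
by move/eqP; rewrite /z -(divff y0) (can_eq (divfK y0)) => /eqP.
Qed.
End Trace.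


Section Fourier.
Variables (n : nat) (F : finFieldType).
Hypothesis hF : #|F| = (2 ^ n)%N.
Variable B : {set F}.

Definition ee (x : F) : int := (-1) ^+ (x \in B).
Definition WW (mu : F) : int := walsh n (fun x => x \in B) mu.

Lemma WWE mu : WW mu = \sum_x ee x * trsign n (mu * x).
Proof. by []. Qed.

Lemma sum_delta (f : F -> int) c :
  \sum_(x : F) f x * (if c + x == 0 then (#|F|)%:R else 0) = f c * (#|F|)%:R.
Proof.
rewrite (bigD1 c) //= (addxx hF) eqxx big1 ?addr0 // => x xc.
by rewrite addr_eq0 (oppF hF) eq_sym (negbTE xc) mulr0.
Qed.

Lemma inv_fourier z : ee z * (#|F|)%:R = \sum_mu WW mu * trsign n (mu * z).
Proof.
have E : \sum_mu WW mu * trsign n (mu * z)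
       = \sum_mu \sum_x ee x * trsign n ((z + x) * mu).
  apply: eq_bigr => mu _; rewrite WWE mulr_suml; apply: eq_bigr => x _.
  by rewrite -mulrA -(trsignD hF); congr (_ * trsign n _); ring.
rewrite E exchange_big /= -(sum_delta ee z); apply: eq_bigr => x _.
by rewrite -mulr_sumr (orth hF) mulrC.
Qed.


Definition TT (u : F) : int := \sum_x \sum_y ee x * ee y * ee (x + u * (y - x)).

Lemma qT u : TT u * (#|F|)%:R = \sum_mu WW mu * WW (mu * (1 - u)) * WW (mu * u).
Proof.
have E1 : TT u * (#|F|)%:R = \sum_x \sum_y \sum_mu
    WW mu * ((ee x * trsign n ((mu * (1 - u)) * x)) * (ee y * trsign n ((mu * u) * y))).
  rewrite /TT mulr_suml; apply: eq_bigr => x _; rewrite mulr_suml; apply: eq_bigr => y _.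
  rewrite -mulrA inv_fourier mulr_sumr; apply: eq_bigr => mu _.
  have -> : mu * (x + u * (y - x)) = (mu * (1 - u)) * x + (mu * u) * y by ring.
  rewrite (trsignD hF); ring.
have swap3 (f : F -> F -> F -> int) :
    \sum_x \sum_y \sum_mu f x y mu = \sum_mu \sum_x \sum_y f x y mu.
  under eq_bigr do rewrite exchange_big /=.
  by rewrite exchange_big.
rewrite E1 swap3; apply: eq_bigr => mu _.
under eq_bigr do under eq_bigr do rewrite -mulrA.
under eq_bigr do rewrite -mulr_sumr.
rewrite -mulr_sumr -mulrA; congr (_ * _).
rewrite !WWE big_distrlr /=; apply: eq_bigr => x _; apply: eq_bigr => y _; by rewrite !mulrA.
Qed.
End Fourier.

Section G3.
Variables (n : nat) (F : finFieldType).
Hypothesis hF : #|F| = (2 ^ n)%N.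
Variable t : nat.

Definition GG (l : F) : int := \sum_x trsign n (x ^+ t + l * x).

Lemma G3 a b : \sum_l GG l * GG (l * a) * GG (l * b)
  = (#|F|)%:R * \sum_y \sum_z trsign n ((a * y + b * z) ^+ t + y ^+ t + z ^+ t).
Proof.
have E1 l : GG l * GG (l * a) * GG (l * b) = \sum_y \sum_z \sum_x
   trsign n (x ^+ t + l * x) * trsign n (y ^+ t + l * a * y) * trsign n (z ^+ t + l * b * z).
  have -> : GG l * GG (l * a) * GG (l * b) = GG (l * a) * GG (l * b) * GG l by ring.
  rewrite /GG big_distrlr /= mulr_suml; apply: eq_bigr => y _.
  rewrite mulr_suml; apply: eq_bigr => z _.
  rewrite mulr_sumr; apply: eq_bigr => x _; ring.
under eq_bigr do rewrite E1.
have swap (f : F -> F -> F -> F -> int) :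
    \sum_l \sum_y \sum_z \sum_x f l y z x = \sum_y \sum_z \sum_x \sum_l f l y z x.
  rewrite exchange_big; apply: eq_bigr => y _.
  rewrite exchange_big; apply: eq_bigr => z _.
  by rewrite exchange_big.
rewrite swap mulr_sumr; apply: eq_bigr => y _; rewrite mulr_sumr; apply: eq_bigr => z _.
have E2 x : \sum_l trsign n (x ^+ t + l * x) * trsign n (y ^+ t + l * a * y) *
     trsign n (z ^+ t + l * b * z)
   = (trsign n (x ^+ t) * trsign n (y ^+ t) * trsign n (z ^+ t)) *
     (if (a * y + b * z) + x == 0 then (#|F|)%:R else 0).
  rewrite -(orth hF) mulr_sumr; apply: eq_bigr => l _.
  rewrite !(trsignD hF).
  have -> : (a * y + b * z + x) * l = l * x + l * a * y + l * b * z by ring.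
  rewrite !(trsignD hF); ring.
under eq_bigr do rewrite E2.
rewrite (sum_delta hF (fun x => trsign n (x ^+ t) * trsign n (y ^+ t) * trsign n (z ^+ t))).
by rewrite -!(trsignD hF) mulrC.
Qed.
End G3.

Section HZ.
Variables (n : nat) (F : finFieldType).
Hypothesis hF : #|F| = (2 ^ n)%N.
Variable t : nat.
Hypothesis ht : (0 < t)%N.
Hypothesis hct : coprime t (2 ^ n).-1.

Lemma sum_pow (f : F -> int) : \sum_z f (z ^+ t) = \sum_z f z.
Proof. by rewrite [RHS](reindex_inj (pow_inj hF ht hct)). Qed.

Lemma sum_chi_pow (c : F) : \sum_y trsign n (y ^+ t * c) = if c == 0 then (#|F|)%:R else 0.
Proof.
rewrite -(orth hF) (sum_pow (fun v => trsign n (v * c))).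
by apply: eq_bigr => y _; rewrite mulrC.
Qed.

Lemma HZ (a b : F) : b ^+ t != 1 ->
  \sum_y \sum_z trsign n ((a * y + b * z) ^+ t + y ^+ t + z ^+ t)
  = (#|F|)%:R * (#|[set w : F | (b * w + a) ^+ t + w ^+ t + 1 == 0]|)%:R - (#|F|)%:R.
Proof.
move=> hb.
rewrite (bigD1 0) //=.
have -> : \sum_z trsign n ((a * 0 + b * z) ^+ t + 0 ^+ t + z ^+ t) = 0.
  have E z : (a * 0 + b * z) ^+ t + 0 ^+ t + z ^+ t = z ^+ t * (b ^+ t + 1).
    by rewrite expr0n (gtn_eqF ht) mulr0 add0r addr0 exprMn; ring.
  under eq_bigr do rewrite E.
  rewrite sum_chi_pow ifF //; apply/negP => /eqP.
  by move/eqP; rewrite addr_eq0 (oppF hF) (negbTE hb).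
rewrite add0r.
have E2 y : y != 0 -> \sum_z trsign n ((a * y + b * z) ^+ t + y ^+ t + z ^+ t)
   = \sum_w trsign n (y ^+ t * ((b * w + a) ^+ t + w ^+ t + 1)).
  move=> y0; rewrite (reindex_inj (mulfI y0)) /=; apply: eq_bigr => w _.
  congr (trsign n _).
  have -> : a * y + b * (y * w) = y * (b * w + a) by ring.
  by rewrite !exprMn; ring.
rewrite (eq_bigr _ E2) exchange_big /=.
have E3 w : \sum_(y | y != 0) trsign n (y ^+ t * ((b * w + a) ^+ t + w ^+ t + 1))
   = (if (b * w + a) ^+ t + w ^+ t + 1 == 0 then (#|F|)%:R else 0) - 1.
  rewrite -sum_chi_pow [in RHS](bigD1 0) //= expr0n (gtn_eqF ht) mul0r trsign0.
  by rewrite addrC addrK.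
under eq_bigr do rewrite E3.
rewrite sumrB -big_mkcond /= !sumr_const.
rewrite [in RHS]mulr_natr cardsE; congr (_ - _).
Qed.
End HZ.

Section Expand.
Variables (F : finFieldType) (B : {set F}).

Definition bb (x : F) : int := (x \in B)%:R.

Lemma ee_bb x : ee B x = 1 - 2 * bb x.
Proof. by rewrite /ee /bb; case: (x \in B). Qed.

Lemma sum_bb : \sum_x bb x = (#|B|)%:R.
Proof.
rewrite /bb (eq_bigr (fun x => if x \in B then 1 else 0)); last by move=> x _; case: (x \in B).
by rewrite -big_mkcond /= sumr_const.
Qed.

Lemma sum_bb_aff (al be : F) : al != 0 -> \sum_x bb (al * x + be) = (#|B|)%:R.
Proof.
move=> a0; rewrite -sum_bb [RHS](reindex_inj (h := fun x => al * x + be)) //.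
by move=> x y /= /addIr /(mulfI a0).
Qed.

Lemma sum2_add (f g : F -> F -> int) :
  \sum_x \sum_y (f x y + g x y) = \sum_x \sum_y f x y + \sum_x \sum_y g x y.
Proof. rewrite -big_split; apply: eq_bigr => x _; by rewrite big_split. Qed.

Lemma sum2_scale c (f : F -> F -> int) :
  \sum_x \sum_y (c * f x y) = c * \sum_x \sum_y f x y.
Proof. rewrite mulr_sumr; apply: eq_bigr => x _; by rewrite mulr_sumr. Qed.

Lemma sumc (c : int) : \sum_(x : F) c = c * (#|F|)%:R.
Proof. by rewrite sumr_const mulr_natr. Qed.

Definition MM (u : F) : int := \sum_x \sum_y bb x * bb y * bb (x + u * (y - x)).

Lemma expandT u : u != 0 -> u != 1 ->
  TT B u = (#|F|)%:R * (#|F|)%:R - 6 * (#|F|)%:R * (#|B|)%:R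
           + 12 * (#|B|)%:R * (#|B|)%:R - 8 * MM u.
Proof.
move=> u0 u1.
have u1' : 1 - u != 0 by rewrite subr_eq0 eq_sym.
set q : int := (#|F|)%:R; set k : int := (#|B|)%:R.
have E x y : ee B x * ee B y * ee B (x + u * (y - x)) =
   1 + (-2) * bb x + (-2) * bb y + (-2) * bb (x + u * (y - x))
   + 4 * (bb x * bb y) + 4 * (bb x * bb (x + u * (y - x)))
   + 4 * (bb y * bb (x + u * (y - x))) + (-8) * (bb x * bb y * bb (x + u * (y - x))).
  rewrite !ee_bb; ring.
rewrite /TT.
under eq_bigr do under eq_bigr do rewrite E.
rewrite !sum2_add !sum2_scale.
have zy x y : x + u * (y - x) = u * y + (1 - u) * x by ring.
have zx x y : x + u * (y - x) = (1 - u) * x + u * y by ring.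
have A1 : \sum_(x : F) \sum_(y : F) (1 : int) = q * q.
  by rewrite sumc sumc mul1r.
have A2 : \sum_(x : F) \sum_(y : F) bb x = q * k.
  under eq_bigr do rewrite sumc.
  by rewrite -mulr_suml sum_bb mulrC.
have A3 : \sum_(x : F) \sum_(y : F) bb y = q * k.
  under eq_bigr do rewrite sum_bb.
  by rewrite sumc mulrC.
have A4 : \sum_(x : F) \sum_(y : F) bb (x + u * (y - x)) = q * k.
  under eq_bigr => x _ do under eq_bigr => y _ do rewrite zy.
  under eq_bigr => x _ do rewrite sum_bb_aff //.
  by rewrite sumc mulrC.
have A5 : \sum_(x : F) \sum_(y : F) (bb x * bb y) = k * k.
  under eq_bigr => x _ do rewrite -mulr_sumr sum_bb.
  by rewrite -mulr_suml sum_bb.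
have A6 : \sum_(x : F) \sum_(y : F) (bb x * bb (x + u * (y - x))) = k * k.
  under eq_bigr => x _ do under eq_bigr => y _ do rewrite zy.
  under eq_bigr => x _ do rewrite -mulr_sumr sum_bb_aff //.
  by rewrite -mulr_suml sum_bb.
have A7 : \sum_(x : F) \sum_(y : F) (bb y * bb (x + u * (y - x))) = k * k.
  rewrite exchange_big /=.
  under eq_bigr => y _ do under eq_bigr => x _ do rewrite zx.
  under eq_bigr => y _ do rewrite -mulr_sumr sum_bb_aff //.
  by rewrite -mulr_suml sum_bb.
rewrite A1 A2 A3 A4 A5 A6 A7 /MM; ring.
Qed.
End Expand.

Lemma sum_ind (T : finType) (A : {set T}) : \sum_(x : T) (((x \in A) : nat)%:R : int) = (#|A|)%:R.
Proof.
rewrite (eq_bigr (fun x => if x \in A then 1 else 0)); last by move=> x _; case: (x \in A).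
by rewrite -big_mkcond /= sumr_const.
Qed.

Section MMcard.
Variables (F : finFieldType) (B : {set F}).

Definition Nset (u : F) : {set F * F} :=
  [set xy : F * F | [&& xy.1 != xy.2, xy.1 \in B, xy.2 \in B & xy.1 + u * (xy.2 - xy.1) \in B]].

Lemma MM_card u : MM B u = (#|Nset u| + #|B|)%:R.
Proof.
rewrite natrD /MM.
have E x y : bb B x * bb B y * bb B (x + u * (y - x)) =
   (((x, y) \in Nset u) : nat)%:R + (((x == y) && (x \in B)) : nat)%:R.
  rewrite /bb inE /=; case: eqP => [->|_]; rewrite ?subrr ?mulr0 ?addr0 /=.
    by case: (y \in B).
  by case: (x \in B); case: (y \in B); case: (_ \in B).
under eq_bigr do under eq_bigr do rewrite E.
rewrite sum2_add; congr (_ + _).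
  by rewrite pair_big /= -sum_ind; apply: eq_bigr => -[x y].
rewrite -sum_bb; apply: eq_bigr => x _.
rewrite (bigD1 x) //= eqxx big1 ?addr0 // => y /negbTE.
by rewrite eq_sym => ->.
Qed.
End MMcard.


Section Design.
Variables (F : finFieldType) (B : {set F}).

Definition AA : {set F * F} := [set ab : F * F | ab.1 != 0].
Definition img (ab : F * F) (S : {set F}) : {set F} := [set ab.1 * x + ab.2 | x in S].
Definition stab : {set F * F} := [set ab in AA | img ab B == B].
Definition Pset (T : {set F}) : {set F * F} := [set ab in AA | T \subset img ab B].

Lemma orbitE : GA1_orbit B = [set img ab B | ab in AA].
Proof. by []. Qed.

Lemma mem_img (ab : F * F) S y : ab.1 != 0 -> (y \in img ab S) = ((y - ab.2) / ab.1 \in S).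
Proof.
move=> a0; apply/imsetP/idP => [[x xS ->]|yS].
  by rewrite addrK mulrC mulKf.
by exists ((y - ab.2) / ab.1) => //; rewrite mulrC divfK // subrK.
Qed.

Definition hh (ab0 ab : F * F) : F * F := (ab0.1 * ab.1, ab0.1 * ab.2 + ab0.2).

Lemma img_comp ab0 ab S : img (hh ab0 ab) S = img ab0 (img ab S).
Proof. by rewrite /img -imset_comp; apply: eq_imset => x /=; ring. Qed.

Lemma img_inj ab0 : ab0.1 != 0 -> injective (img ab0).
Proof.
move=> a0; apply: imset_inj => x y /= /addIr; exact: mulfI.
Qed.

Lemma fiber Bl : Bl \in GA1_orbit B -> #|[set ab in AA | img ab B == Bl]| = #|stab|.
Proof.
rewrite orbitE => /imsetP[ab0 Hab0 ->]; move: Hab0; rewrite inE => a0.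
have hinj : injective (hh ab0).
  move=> [a b] [a' b'] [] /(mulfI a0) -> /addIr /(mulfI a0) -> //.
rewrite -(card_imset (mem stab) hinj); apply: eq_card => ab; apply/idP/idP.
  rewrite inE => /andP[]; rewrite inE => a1 /eqP E.
  apply/imsetP; exists (ab.1 / ab0.1, (ab.2 - ab0.2) / ab0.1).
    rewrite !inE /= mulf_neq0 ?invr_neq0 //=; apply/eqP.
    apply: (img_inj a0); rewrite -img_comp -E; congr img.
    by case: ab a1 {E} => a b /= a1; rewrite /hh /=; congr pair; field.
  by case: ab a1 {E} => a b /= a1; rewrite /hh /=; congr pair; field.
move=> /imsetP[ab' Hab' ->]; move: Hab'; rewrite !inE => /andP[a1 /eqP E].
by rewrite /hh /= mulf_neq0 //= -/(hh ab0 ab') img_comp E.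
Qed.

Lemma count_blocks (T : {set F}) :
  (#|[set Bl in GA1_orbit B | T \subset Bl]| * #|stab|)%N = #|Pset T|.
Proof.
rewrite -sum_nat_const -[#|Pset T|]sum1_card.
rewrite (partition_big (fun ab => img ab B) (fun Bl => Bl \in [set Bl in GA1_orbit B | T \subset Bl])).
  apply: eq_bigr => Bl; rewrite inE => /andP[HBl TBl].
  rewrite -(fiber HBl) -sum1_card; apply: eq_bigl => ab.
  rewrite !inE; case: (img ab B =P Bl) => [->|_]; last by rewrite !andbF.
  by rewrite TBl !andbT.
move=> ab; rewrite !inE => /andP[a0 sT]; rewrite sT andbT.
by rewrite orbitE; apply/imsetP; exists ab; rewrite ?inE.
Qed.

Definition NN (u : F) : {set F * F} :=
  [set xy : F * F | [&& xy.1 != xy.2, xy.1 \in B, xy.2 \in B & xy.1 + u * (xy.2 - xy.1) \in B]].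

Lemma sub3 (p q r : F) (S : {set F}) : ([set p; q; r] \subset S) = [&& p \in S, q \in S & r \in S].
Proof.
apply/subsetP/idP => [H|/and3P[pS qS rS] x].
  by rewrite !H // !inE eqxx ?orbT.
rewrite !inE => /orP[/orP[]|]/eqP->; by [].
Qed.

Lemma Pset3 p q r : p != q -> q != r -> r != p ->
  #|Pset [set p; q; r]| = #|NN ((r - p) / (q - p))|.
Proof.
move=> pq qr rp.
have qp0 : q - p != 0 by rewrite subr_eq0 eq_sym.
set u := (r - p) / (q - p).
pose g (xy : F * F) : F * F := ((q - p) / (xy.2 - xy.1), p - (q - p) / (xy.2 - xy.1) * xy.1).
have ginj : {in NN u &, injective g}.
  move=> [x y] [x' y']; rewrite !inE /= => /andP[xy _] /andP[xy' _] [] E1 E2.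
  have yx0 : y - x != 0 by rewrite subr_eq0 eq_sym.
  have yx0' : y' - x' != 0 by rewrite subr_eq0 eq_sym.
  have E3 : y - x = y' - x'.
    by move: E1 => /(mulfI qp0) /invr_inj.
  rewrite -E1 in E2; move: E2 => /addrI /oppr_inj /(mulfI _) E4.
  have Ex : x = x' by apply: E4; rewrite mulf_neq0 ?invr_neq0.
  by move: E3; rewrite Ex => /addIr ->.
rewrite -(card_in_imset ginj); apply: eq_card => -[a b]; apply/idP/idP.
  rewrite !inE /= => /andP[a0]; rewrite sub3 !mem_img //= => /and3P[pB qB rB].
  apply/imsetP; exists ((p - b) / a, (q - b) / a).
    rewrite inE /= pB qB /=.
    have -> : (p - b) / a + u * ((q - b) / a - (p - b) / a) = (r - b) / a.
      by rewrite /u; field; apply/andP; split.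
    rewrite rB !andbT; apply: contra pq => /eqP E.
    by apply/eqP; move: E => /(mulIf (invr_neq0 a0)) /addIr.
  rewrite /g /=.
  have H : (q - b) / a - (p - b) / a = (q - p) / a by field.
  by rewrite H; congr pair; field; apply/andP; split.
move=> /imsetP[[x y]]; rewrite inE /= => /and4P[xy xB yB zB] ->.
have yx0 : y - x != 0 by rewrite subr_eq0 eq_sym.
have a0 : (q - p) / (y - x) != 0 by rewrite mulf_neq0 ?invr_neq0.
rewrite inE /g /= inE /= a0 /= sub3 !mem_img //=.
have -> : (p - (p - (q - p) / (y - x) * x)) / ((q - p) / (y - x)) = x.
  by field; rewrite yx0 qp0.
have -> : (q - (p - (q - p) / (y - x) * x)) / ((q - p) / (y - x)) = y by field; rewrite yx0 qp0.
have -> : (r - (p - (q - p) / (y - x) * x)) / ((q - p) / (y - x)) = x + u * (y - x).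
  by rewrite /u; field; rewrite yx0 qp0.
by rewrite xB yB zB.
Qed.
End Design.


Section Key.
Variables (n : nat) (F : finFieldType).
Hypothesis hF : #|F| = (2 ^ n)%N.
Variables (B : {set F}) (t d : nat).
Hypotheses (ht : (0 < t)%N) (hd : (0 < d)%N).
Hypothesis hgcd : coprime (t * d) (2 ^ n).-1.
Hypothesis hW : forall mu : F, walsh n (fun x => x \in B) mu =
          \sum_(x : F) trsign n (x ^+ t + mu ^+ d * x).

Definition ZZ (u : F) : nat :=
  #|[set x : F | (u ^+ d * x + (1 + u) ^+ d) ^+ t + x ^+ t + 1 == 0]|.

Lemma key u : u != 0 -> u != 1 ->
  (#|F|)%:R * (ZZ u)%:R - (#|F|)%:R =
  (#|F|)%:R * (#|F|)%:R - 6 * (#|F|)%:R * (#|B|)%:R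
  + 12 * (#|B|)%:R * (#|B|)%:R - 8 * ((#|NN B u| + #|B|)%:R : int).
Proof.
move=> u0 u1.
have [ct cd] : coprime t (2 ^ n).-1 /\ coprime d (2 ^ n).-1.
  by move: hgcd; rewrite coprimeMl => /andP[].
have cdt : coprime (d * t) (2 ^ n).-1 by rewrite mulnC.
have q0 : ((#|F|)%:R : int) != 0 by rewrite Num.Theory.pnatr_eq0 -lt0n; apply/card_gt0P; exists 0.
have NNE : NN B u = Nset B u by [].
rewrite NNE -MM_card -expandT //.
apply: (mulIf q0).
rewrite (qT hF).
have WG mu : WW n B mu = GG n t (mu ^+ d) by rewrite /WW hW.
under eq_bigr do rewrite !WG !exprMn.
rewrite (sum_pow hF hd cd (fun l => GG n t l * GG n t (l * (1 - u) ^+ d) * GG n t (l * u ^+ d))).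
rewrite (G3 hF) (HZ hF) //.
- rewrite (oppF hF); ring.
- rewrite -exprM; apply/eqP => E.
  have : (u ^+ (d * t) = 1 ^+ (d * t)) by rewrite E expr1n.
  have dt0 : (0 < d * t)%N by rewrite muln_gt0 hd ht.
  by move/(pow_inj hF dt0 cdt)/eqP; rewrite (negbTE u1).
Qed.
End Key.

Lemma stab_gt0 (F : finFieldType) (B : {set F}) : (0 < #|stab B|)%N.
Proof.
apply/card_gt0P; exists (1, 0); rewrite !inE /= oner_eq0 /=.
by apply/eqP/setP => x; rewrite mem_img ?oner_eq0 //= subr0 divr1.
Qed.

Lemma tri3 (F : finFieldType) (x y z : F) : x != y -> y != z -> z != x -> (2 < #|[set x; y; z]|)%N.
Proof.
move=> xy yz zx; apply/card_gt2P; exists x, y, z; split => //.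
by split; rewrite !inE eqxx ?orbT.
Qed.

Lemma card3 (F : finFieldType) (x y z : F) : x != y -> y != z -> z != x -> #|[set x; y; z]| = 3%N.
Proof.
move=> xy yz zx; apply/eqP; rewrite eqn_leq tri3 // andbT.
rewrite cardsU cards2 cards1 xy.
exact: leq_subr.
Qed.

Lemma set3 (F : finFieldType) (T : {set F}) : #|T| = 3%N ->
  exists x y z, [/\ x != y, y != z, z != x & T = [set x; y; z]].
Proof.
move=> T3.
have : (2 < #|T|)%N by rewrite T3.
move=> /card_gt2P [x [y [z [[xT yT zT] [xy yz zx]]]]].
exists x, y, z; split => //.
apply/eqP; rewrite eq_sym eqEcard sub3 xT yT zT /= T3.
exact: tri3.
Qed.

Unset Implicit Arguments.
Theorem theorem10 (n : nat) (F : finFieldType) (hF : #|F| = (2 ^ n)%N)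
  (k : nat) (B : {set F}) (hB : #|B| = k) (hk : (3 <= k)%N)
  (t d : nat) (ht : (0 < t)%N) (hd : (0 < d)%N)
  (hgcd : coprime (t * d) (2 ^ n).-1)
  (hW : forall mu : F, walsh n (fun x => x \in B) mu =
          \sum_(x : F) trsign n (x ^+ t + mu ^+ d * x)) :
  is_t_design 3 k (GA1_orbit B) <->
  exists c : nat, forall u : F, u != 0 -> u != 1 ->
    #|[set x : F | (u ^+ d * x + (1 + u) ^+ d) ^+ t + x ^+ t + 1 == 0]| = c.
Proof.
have K := key hF ht hd hgcd hW.
have q0 : (0 < #|F|)%N by apply/card_gt0P; exists 0.
have s0 := stab_gt0 B.
have P01u u : u != 0 -> u != 1 -> #|Pset B [set 0; 1; u]| = #|NN B u|.
  move=> u0 u1; have h01 : (0:F) != 1 by rewrite eq_sym oner_eq0.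
  have h1u : (1:F) != u by rewrite eq_sym.
  by rewrite (Pset3 _ h01 h1u u0) !subr0 divr1.
split.
  move=> [_ [lam Hlam]].
  have HN u : u != 0 -> u != 1 -> #|NN B u| = (lam * #|stab B|)%N.
    move=> u0 u1; rewrite -P01u // -count_blocks Hlam //.
    have h01 : (0:F) != 1 by rewrite eq_sym oner_eq0.
    have h1u : (1:F) != u by rewrite eq_sym.
    by rewrite card3.
  case: (pickP (fun u : F => (u != 0) && (u != 1))) => [u0 /andP[u00 u01]|none]; last first.
    by exists 0%N => u u0 u1; have := none u; rewrite u0 u1.
  exists (ZZ t d u0) => u ua ub.
  have E1 := K u ua ub; have E2 := K u0 u00 u01.
  rewrite !HN // in E1 E2; rewrite -/(ZZ t d u).
  have qz : ((#|F|)%:R : int) != 0 by rewrite Num.Theory.pnatr_eq0 -lt0n.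
  by move: E1; rewrite -E2 => /addIr /(mulfI qz) /eqP; rewrite Num.Theory.eqr_nat => /eqP.
move=> [c Hc].
have NNc u u' : u != 0 -> u != 1 -> u' != 0 -> u' != 1 -> #|NN B u| = #|NN B u'|.
  move=> ua ub ua' ub'.
  have E1 := K u ua ub; have E2 := K u' ua' ub'.
  rewrite /ZZ !Hc // in E1 E2; lia.
split.
  move=> Bl /imsetP[ab]; rewrite inE => a0 ->.
  rewrite card_imset -?hB // => x y /= /addIr; exact: mulfI.
case: (pickP (fun u : F => (u != 0) && (u != 1))) => [u0 /andP[u00 u01]|none].
  exists (#|NN B u0| %/ #|stab B|)%N => T /set3 [x [y [z [xy yz zx ->]]]].
  have yx0 : y - x != 0 by rewrite subr_eq0 eq_sym.
  have ua : (z - x) / (y - x) != 0 by rewrite mulf_neq0 ?invr_neq0 // subr_eq0.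
  have ub : (z - x) / (y - x) != 1.
    apply: contra yz => /eqP E; apply/eqP.
    have : z - x = y - x by rewrite -[z - x](divfK yx0) E mul1r.
    by move/addIr.
  rewrite -(NNc _ _ ua ub u00 u01) -Pset3 // -count_blocks mulnK //.
exists 0%N => T /set3 [x [y [z [xy yz zx ->]]]].
have yx0 : y - x != 0 by rewrite subr_eq0 eq_sym.
have ua : (z - x) / (y - x) != 0 by rewrite mulf_neq0 ?invr_neq0 // subr_eq0.
have ub : (z - x) / (y - x) != 1.
  apply: contra yz => /eqP E; apply/eqP.
  have : z - x = y - x by rewrite -[z - x](divfK yx0) E mul1r.
  by move/addIr.
by have := none ((z - x) / (y - x)); rewrite ua ub.
Qed.
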